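(* Let $A=T_{\sigma_A}$ and $B=T_{\sigma_B}$ be global pseudo-differential operators on $SU_q(2)$ with symbols $\sigma_A,\sigma_B\in\Phi^0(SU_q(2))$. Then $A\circ B$ is a global pseudo-differential operator with symbol $\sigma_{A\circ B}(l)=\sigma_A(l)\sigma_B(l)$ for all $l\in\frac12\mathbb{N}$.
   Context: Fix $0<q<1$. $SU_q(2)$ is the $*$-algebra generated by $a,c$ with $ac^*=qc^*a$, $ca^*=qa^*c$, $c^*a^*=qa^*c^*$, $c^*c=cc^*$, $aa^*+q^2c^*c=a^*a+c^*c=1$, with Haar state $h$, inner product $\langle y,x\rangle=h(xy^* )$, and we also use this name for its completion. For $l\in\frac12\mathbb{N}$, $T^l=[t^l_{ij}]_{-l\le i,j\le l}$ is the irreducible unitary matrix corepresentation of dimension $2l+1$; $\{t^l_{ij}\}$ is an orthogonal basis with $h(t^l_{ij}(t^l_{ij})^* )=[2l+1]_q^{-1}q^{2j}$, where $[x]_q=\frac{q^x-q^{-x}}{q-q^{-1}}$. Fourier transform: $\hat f(l)_{mn}=h(f(t^l_{nm})^* )$. For a $(2l+1)\times(2l+1)$ matrix $M$, $Tr_q(M)=Tr(D_qM)$ with $D_q=\mathrm{diag}(q^{-2i})_{-l\le i\le l}$; Fourier inversion reads $f=\sum_l[2l+1]_qTr_q(\hat f(l)T^l)$. A symbol is a map $\sigma:\frac12\mathbb{N}\to\bigcup_lM_{2l+1}(\mathbb{C})\otimes SU_q(2)$ with $\sigma(l)$ of size $2l+1$; its operator is $T_\sigma f=\mathfrak F^{-1}(\sigma\mathfrak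 Ff)=\sum_l[2l+1]_qTr_q(\sigma(l)\hat f(l)T^l)$. For $l$ write $I_{2l+1}=\{-l,-l+1,\dots,l\}$. A symbol $\sigma$ is homogeneous of Fourier order $m\in\frac12\mathbb{N}$ if for every $l$ there is a map $\psi_\sigma(l):I_{2l+1}\times I_{2l+1}\to I_{2l+1}\times I_{2l+1}$ with $\sigma(l)_{ij}\in\mathrm{Span}\{t^m_{\psi_\sigma(l)(i,j)}\}$, and $\sigma(l)_{ij}=0$ whenever $\psi_\sigma(l)(i,j)\notin I_{2m+1}\times I_{2m+1}$. $\Phi^m(SU_q(2))$ is the set of finite linear combinations of homogeneous symbols of Fourier order $m$. (In particular symbols in $\Phi^0$ have complex scalar entries.) *)

(* Defs.v *)
(* Axiomatic rendering of the polynomial *-algebra of SU_q(2),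
   its Haar state and its matrix coefficients t^l_{ij}. *)
From HB Require Import structures.
From mathcomp Require Import all_boot all_order all_algebra.
Set Implicit Arguments. Unset Strict Implicit. Unset Printing Implicit Defensive.
Import Order.TTheory GRing.Theory Num.Theory.
Local Open Scope ring_scope.

(* Conventions: l \in 1/2 N is encoded by n = 2l : nat; matrices of size
   2l+1 are 'M_(n.+1); the index k : 'I_(n.+1) stands for the half-integer
   k - n/2 \in I_{2l+1} = {-l, ..., l}.  Hence q^{2k_true} = q^(2k - n). *)

Section Defs.
Variables (C : numClosedFieldType) (A : algType C).

Definition qnum (q : C) (m : nat) : C :=
  (q ^ (m%:Z) - q ^ (- m%:Z)) / (q - q^-1).

Definition qpow2 (q : C) (n k : nat) : C := q ^ (2 * k%:Z - n%:Z).

Definition is_SUq2 (q : C) (star : A -> A) (a c : A) (h : A -> C)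
    (t : forall n : nat, 'M[A]_(n.+1)) : Prop :=
  [/\
      [/\ (forall x y : A, star (x + y) = star x + star y),
      (forall (k : C) (x : A), star (k *: x) = k^* *: star x),
      (forall x y : A, star (x * y) = star y * star x)
      & (forall x : A, star (star x) = x)],
      [/\ a * star c = q *: (star c * a),
          c * star a = q *: (star a * c),
          star c * star a = q *: (star a * star c),
          star c * c = c * star c
        & a * star a + (q ^+ 2) *: (star c * c) = 1
          /\ star a * a + star c * c = 1],
      [/\ (forall (k : C) (x y : A), h (k *: x + y) = k * h x + h y),
          h 1 = 1
        & (forall x : A, 0 <= h (x * star x))],
      [/\ t 0%N = 1,
          (forall n, t n *m (map_mx star (t n))^T = 1)
        & (forall n, (map_mx star (t n))^T *m t n = 1)]
      & [/\
      (forall (n n' : nat) (i j : 'I_n.+1) (i' j' : 'I_n'.+1),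
          h (t n i j * star (t n' i' j')) =
          if [&& n == n', (i : nat) == i' & (j : nat) == j']
          then (qnum q n.+1)^-1 * qpow2 q n j else 0)
    &
      (forall f : A, exists (N : nat) (coef : forall n : nat, 'M[C]_(n.+1)),
          f = \sum_(n < N) \sum_(i < n.+1) \sum_(j < n.+1)
                coef n i j *: t n i j)]].

Definition fourier (star : A -> A) (h : A -> C)
    (t : forall n : nat, 'M[A]_(n.+1)) (f : A) (n : nat) : 'M[C]_(n.+1) :=
  \matrix_(m, k) h (f * star (t n k m)).

Definition trq (q : C) (n : nat) (M : 'M[A]_(n.+1)) : A :=
  \sum_(i < n.+1) (qpow2 q n i)^-1 *: M i i.

Definition symbol := forall n : nat, 'M[A]_(n.+1).

Definition psido_term (q : C) (star : A -> A) (h : A -> C)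
    (t : forall n : nat, 'M[A]_(n.+1)) (sigma : symbol) (f : A) (n : nat) : A :=
  qnum q n.+1 *:
    trq q (sigma n *m map_mx (fun x : C => x%:A) (fourier star h t f n) *m t n).

(* Op = T_sigma: since f has finitely supported Fourier transform, the
   Fourier series is a finite sum; any cut-off beyond the support is used. *)
Definition is_psido (q : C) (star : A -> A) (h : A -> C)
    (t : forall n : nat, 'M[A]_(n.+1)) (Op : A -> A) (sigma : symbol) : Prop :=
  forall (f : A) (N : nat),
    (forall n, (N <= n)%N -> fourier star h t f n = 0) ->
    Op f = \sum_(n < N) psido_term q star h t sigma f n.

(* homogeneous of Fourier order m (m encoded as mm = 2m) *)
Definition homogeneous (t : forall n : nat, 'M[A]_(n.+1)) (mm : nat)
    (sigma : symbol) : Prop :=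
  exists psi : forall n : nat, 'I_n.+1 -> 'I_n.+1 -> 'I_n.+1 * 'I_n.+1,
  forall (n : nat) (i j : 'I_n.+1),
    let p := psi n i j in
    (* p lies in I_{2m+1} x I_{2m+1} iff it is represented by (a, b) *)
    (forall a b : 'I_mm.+1,
        2 * (a : nat)%:Z - mm%:Z = 2 * (p.1 : nat)%:Z - n%:Z ->
        2 * (b : nat)%:Z - mm%:Z = 2 * (p.2 : nat)%:Z - n%:Z ->
        exists k : C, sigma n i j = k *: t mm a b) /\
    ((~ exists a b : 'I_mm.+1,
          2 * (a : nat)%:Z - mm%:Z = 2 * (p.1 : nat)%:Z - n%:Z /\
          2 * (b : nat)%:Z - mm%:Z = 2 * (p.2 : nat)%:Z - n%:Z) ->
        sigma n i j = 0).

Definition Phi (t : forall n : nat, 'M[A]_(n.+1)) (mm : nat) (sigma : symbol)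
    : Prop :=
  exists (K : nat) (sig : 'I_K -> symbol) (coef : 'I_K -> C),
    (forall k, homogeneous t mm (sig k)) /\
    (forall n, sigma n = \sum_(k < K) (coef k)%:A *: sig k n).

End Defs.

(* Main.v *)
Require Import Defs.
From mathcomp Require Import all_boot all_order all_algebra.
Import Order.TTheory GRing.Theory Num.Theory.
Local Open Scope ring_scope.
Set Implicit Arguments. Unset Strict Implicit.

Lemma h0_of (C : numClosedFieldType) (A : algType C) (h : A -> C) :
  (forall (k : C) (x y : A), h (k *: x + y) = k * h x + h y) -> h 0 = 0.
Proof.
move=> hl; have := hl 1 0 0; rewrite scaler0 addr0 mul1r => E.
by have := congr1 (fun z => z - h 0) E; rewrite subrr addrK.
Qed.

Lemma hadd_of (C : numClosedFieldType) (A : algType C) (h : A -> C) :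
  (forall (k : C) (x y : A), h (k *: x + y) = k * h x + h y) ->
  forall x y, h (x + y) = h x + h y.
Proof. by move=> hl x y; rewrite -[x]scale1r hl mul1r scale1r. Qed.

Lemma hZ_of (C : numClosedFieldType) (A : algType C) (h : A -> C) :
  (forall (k : C) (x y : A), h (k *: x + y) = k * h x + h y) ->
  forall k x, h (k *: x) = k * h x.
Proof. by move=> hl k x; rewrite -[k *: x]addr0 hl (h0_of hl) addr0. Qed.

Lemma hsum_of (C : numClosedFieldType) (A : algType C) (h : A -> C)
  (I : Type) (r : seq I) (P : pred I) (F : I -> A) :
  (forall (k : C) (x y : A), h (k *: x + y) = k * h x + h y) ->
  h (\sum_(i <- r | P i) F i) = \sum_(i <- r | P i) h (F i).
Proof.
move=> hl; exact: (big_morph h (hadd_of hl) (h0_of hl)).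
Qed.

Lemma qnum_neq0 (C : numClosedFieldType) (q : C) (m : nat) :
  0 < q -> q < 1 -> qnum q m.+1 != 0.
Proof.
move=> q0 q1; rewrite /qnum mulf_neq0 //; last first.
  rewrite invr_eq0 subr_eq0; apply/negP => /eqP E.
  have H : 1 < q^-1 by rewrite invf_gt1.
  by rewrite -E in H; move: (lt_trans H q1); rewrite ltxx.
rewrite subr_eq0; apply/negP => /eqP E.
have h1 : q ^+ m.+1 < 1 by rewrite exprn_ilt1 // ltW.
have h2 : 1 < (q ^+ m.+1)^-1 by rewrite invf_gt1 // exprn_gt0.
move: E; rewrite -exprnN => E.
by move: (lt_trans h1 h2); rewrite -E ltxx.
Qed.

Lemma qpow2_neq0 (C : numClosedFieldType) (q : C) (n k : nat) :
  0 < q -> qpow2 q n k != 0.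
Proof. by move=> q0; rewrite /qpow2 expfz_neq0 // gt_eqF. Qed.

From Stdlib Require Import Classical.

Lemma Phi0_scalar (C : numClosedFieldType) (A : algType C) (h : A -> C)
  (t : forall n : nat, 'M[A]_(n.+1)) (sigma : symbol A) :
  t 0%N = 1 -> (forall (k : C) (x y : A), h (k *: x + y) = k * h x + h y) ->
  h 1 = 1 -> Phi t 0 sigma ->
  forall n i j, sigma n i j = (h (sigma n i j))%:A.
Proof.
move=> t0 hl h1 [K [sig [coef [hom E]]]] n i j.
suff [c ->] : exists c : C, sigma n i j = c%:A.
  by rewrite hZ_of // h1 mulr1.
rewrite E summxE.
apply: (big_ind (fun x : A => exists c : C, x = c%:A)).
- by exists 0; rewrite scale0r.
- by move=> x y [c1 ->] [c2 ->]; exists (c1 + c2); rewrite scalerDl.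
move=> k _; rewrite mxE.
suff [d ->] : exists d : C, sig k n i j = d%:A.
  by exists (coef k * d); rewrite mulr_algl scalerA.
have [psi Hpsi] := hom k.
have [H1 H2] := Hpsi n i j.
case: (classic (exists a b : 'I_1,
          2 * (a : nat)%:Z - 0%:Z = 2 * ((psi n i j).1 : nat)%:Z - n%:Z /\
          2 * (b : nat)%:Z - 0%:Z = 2 * ((psi n i j).2 : nat)%:Z - n%:Z)).
- move=> [a [b [Ea Eb]]].
  have [d ->] := H1 a b Ea Eb.
  exists d; rewrite t0 (ord1 a) (ord1 b) mxE eqxx /=.
  done.
- by move=> nE; exists 0; rewrite (H2 nE) scale0r.
Qed.

From mathcomp Require Import ring.

Lemma inner_term (C : numClosedFieldType) (A : algType C) (q : C) (star : A -> A)
  (h : A -> C) (t : forall n : nat, 'M[A]_(n.+1)) (M : forall n : nat, 'M[C]_(n.+1))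
  (n : nat) (m k0 : 'I_n.+1) (n' : nat) :
  0 < q -> q < 1 ->
  (forall (n n' : nat) (i j : 'I_n.+1) (i' j' : 'I_n'.+1),
          h (t n i j * star (t n' i' j')) =
          if [&& n == n', (i : nat) == i' & (j : nat) == j']
          then (qnum q n.+1)^-1 * qpow2 q n j else 0) ->
  qnum q n'.+1 * \sum_(i < n'.+1) ((qpow2 q n' i)^-1 *
      \sum_(j < n'.+1) (M n' i j * h (t n' j i * star (t n k0 m))))
  = if n' == n then M n m k0 else 0.
Proof.
move=> q0 q1 orth.
case: eqVneq => [e|ne]; last first.
  rewrite big1 ?mulr0 //. move=> i _. rewrite big1 ?mulr0 //. move=> j _.
  by rewrite orth (negbTE ne) /= mulr0.
subst n'.
under eq_bigr => i _ do under eq_bigr => j _ do rewrite orth eqxx /=.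
rewrite (bigD1 m) //= [X in _ + X]big1 ?addr0; last first.
  move=> i ni; rewrite big1 ?mulr0 // => j _.
  by rewrite (_ : ((i:nat) == m) = false) ?andbF ?mulr0 //; exact: negbTE ni.
rewrite (bigD1 k0) //= [X in _ + X]big1 ?addr0; last first.
  by move=> j nj; rewrite (_ : ((j:nat) == k0) = false) ?mulr0 //; exact: negbTE nj.
rewrite !eqxx /=.
have := qnum_neq0 n q0 q1; have := qpow2_neq0 n m q0.
move: (qnum q n.+1) (qpow2 q n m) => a b an bn.
by field; rewrite an bn.
Qed.

Lemma fourier_inv (C : numClosedFieldType) (A : algType C) (q : C) (star : A -> A)
  (h : A -> C) (t : forall n : nat, 'M[A]_(n.+1)) (M : forall n : nat, 'M[C]_(n.+1))
  (N n : nat) :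
  0 < q -> q < 1 ->
  (forall (k : C) (x y : A), h (k *: x + y) = k * h x + h y) ->
  (forall (n n' : nat) (i j : 'I_n.+1) (i' j' : 'I_n'.+1),
          h (t n i j * star (t n' i' j')) =
          if [&& n == n', (i : nat) == i' & (j : nat) == j']
          then (qnum q n.+1)^-1 * qpow2 q n j else 0) ->
  fourier star h t (\sum_(n' < N) qnum q n'.+1 *:
       trq q (map_mx (fun x : C => x%:A) (M n') *m t n')) n
  = if (n < N)%N then M n else 0.
Proof.
move=> q0 q1 hl orth; apply/matrixP => m k0; rewrite mxE.
rewrite mulr_suml hsum_of //.
under eq_bigr => n' _ do rewrite -scalerAl hZ_of // /trq mulr_suml hsum_of //.
under eq_bigr => n' _ do under eq_bigr => i _ do
  rewrite -scalerAl hZ_of // mxE mulr_suml hsum_of //.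
under eq_bigr => n' _ do under eq_bigr => i _ do under eq_bigr => j _ do
  rewrite mxE mulr_algl -scalerAl hZ_of //.
under eq_bigr => n' _ do rewrite (@inner_term C A q star h t M n m k0 n' q0 q1 orth).
case: ifP => nN.
  rewrite (bigD1 (Ordinal nN)) //= eqxx [X in _ + X]big1 ?addr0 // => i ni.
  by rewrite (_ : ((i:nat) == n) = false) //; exact: negbTE ni.
rewrite mxE big1 // => i _.
rewrite (_ : ((i:nat) == n) = false) //; apply/negbTE.
by rewrite neq_ltn (leq_trans (ltn_ord i)) // leqNgt nN.
Qed.

Theorem mainTheorem4 (C : numClosedFieldType) (A : algType C) (q : C)
    (star : A -> A) (a c : A) (h : A -> C)
    (t : forall n : nat, 'M[A]_(n.+1)) :
  0 < q -> q < 1 ->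
  is_SUq2 q star a c h t ->
  forall (sigmaA sigmaB : symbol A) (OpA OpB : A -> A),
    Phi t 0 sigmaA -> Phi t 0 sigmaB ->
    is_psido q star h t OpA sigmaA ->
    is_psido q star h t OpB sigmaB ->
    is_psido q star h t (OpA \o OpB) (fun n => sigmaA n *m sigmaB n).
Proof.
move=> q0 q1 [_ _ [hl h1 _] [t0 _ _] [orth _]] sA sB OpA OpB PA PB HA HB f N fN.
pose SA := fun n => \matrix_(i < n.+1, j < n.+1) h (sA n i j).
pose SB := fun n => \matrix_(i < n.+1, j < n.+1) h (sB n i j).
have eA : forall n, sA n = map_mx (fun x : C => x%:A) (SA n).
  by move=> n; apply/matrixP => i j; rewrite !mxE -(Phi0_scalar t0 hl h1 PA).
have eB : forall n, sB n = map_mx (fun x : C => x%:A) (SB n).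
  by move=> n; apply/matrixP => i j; rewrite !mxE -(Phi0_scalar t0 hl h1 PB).
have mM : forall m n p (X : 'M[C]_(m, n)) (Y : 'M[C]_(n, p)),
    map_mx (fun x : C => x%:A : A) (X *m Y) =
    map_mx (fun x : C => x%:A) X *m map_mx (fun x : C => x%:A) Y.
  by move=> m n p X Y; exact: (map_mxM (in_alg A)).
have gdef : OpB f = \sum_(n < N) qnum q n.+1 *:
    trq q (map_mx (fun x : C => x%:A) (SB n *m fourier star h t f n) *m t n).
  rewrite (HB f N fN); apply: eq_bigr => n _.
  by rewrite /psido_term eB mM ?mulmxA.
have FB : forall n, fourier star h t (OpB f) n =
    if (n < N)%N then SB n *m fourier star h t f n else 0.
  by move=> n; rewrite gdef; exact: (@fourier_inv C A q star h t (fun n => SB n *m fourier star h t f n)).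
rewrite /= (HA (OpB f) N); last by move=> n Hn; rewrite FB ltnNge Hn.
apply: eq_bigr => n _.
by rewrite /psido_term FB ltn_ord eA eB !mM ?mulmxA.
Qed.
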